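(* Consider a linear binary non-uniform subdivision scheme that is $C^\nu$-convergent for some $\nu>0$, with initial control points given by $\bar p^0\in\mathbb{R}^{n_0\times m}$ and level matrices $S^{[k]}\in\mathbb{R}^{n_k\times n_{k-1}}$ so that $\bar p^k=S^{[k]}\bar p^{k-1}$, with limit curve $p^\infty\subseteq\mathbb{R}^m$. Fix a positive integer $\rho$ and a constant $C>0$. Then for every base sequence $\{A_k\}$ with $A_k\in A^{n_k\times n_k,\rho}_C$, the matrices $A_kS^{[k]}S^{[k-1]}\cdots S^{[1]}\bar p^0=A_k\bar p^k\in\mathbb{R}^{n_k\times m}$ have row sets converging (in the Hausdorff metric) to the same limit, namely $p^\infty$.
   Context: $K^{\rho-1}_C=\{(x_1,\ldots,x_\rho)\in\mathbb{R}^\rho:\sum_ix_i=1,\ |x_i|\le C\}$. For $n_k>\rho$, $K^{n_k,\rho-1}_C$ is the set of row vectors of length $n_k$ of the form $(0,\ldots,0,v,0,\ldots,0)$ with $v\in K^{\rho-1}_C$ occupying $\rho$ consecutive positions. $A^{\ell\times n_k,\rho}_C$ is the set of $\ell\times n_k$ matrices whose rows all lie in $K^{n_k,\rho-1}_C$ and such that the sum of the rows has no zero entry. The limit curve $p^\infty$ is the Hausdorff limit of the sets of points $\mathrm{rows}(\bar p^k)$; $C^\nu$-convergence means that there is a $C^\nu$ function $f$ with $\sup_i|p^k_i-f(2^{-k}i)|\to0$. *)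

(* Defs.v *)
From Stdlib Require Import Reals Lra.
Open Scope R_scope.

(* Matrices / vectors are represented by functions on indices; sizes are explicit. *)
Definition mat := nat -> nat -> R.
Definition vec := nat -> R.

Fixpoint sumR (n : nat) (f : nat -> R) : R :=
  match n with
  | O => 0
  | S n' => sumR n' f + f n'
  end.

Definition matmul (inner : nat) (A B : mat) : mat :=
  fun i j => sumR inner (fun l => A i l * B l j).

Definition dist (m : nat) (x y : vec) : R :=
  sqrt (sumR m (fun j => (x j - y j) ^ 2)).

(* Control points of level k: pbar^0 = p0, pbar^k = S^[k] pbar^(k-1);
   Sm k is the n k x n (k-1) matrix S^[k]. *)
Fixpoint pbar (n : nat -> nat) (Sm : nat -> mat) (p0 : mat) (k : nat) : mat :=
  match k with
  | O => p0
  | S k' => matmul (n k') (Sm (S k')) (pbar n Sm p0 k')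
  end.

Fixpoint Cnu (nu : nat) (g : R -> R) : Prop :=
  match nu with
  | O => continuity g
  | S nu' => exists g' : R -> R,
      (forall x, derivable_pt_lim g x (g' x)) /\ Cnu nu' g'
  end.

Definition Cnu_convergent (nu m : nat) (n : nat -> nat) (Sm : nat -> mat) (p0 : mat) : Prop :=
  exists f : R -> vec,
    (forall j, (j < m)%nat -> Cnu nu (fun t => f t j)) /\
    forall eps, eps > 0 -> exists K, forall k, (K <= k)%nat ->
      forall i, (i < n k)%nat ->
        dist m (pbar n Sm p0 k i) (f (INR i / 2 ^ k)) < eps.

Definition binary_sizes (n : nat -> nat) : Prop :=
  exists c : nat, forall k, (n (S k) <= 2 * n k + c)%nat.

(* Row r of length nk lies in K^{nk,rho-1}_C: supported on rho consecutive
   positions s..s+rho-1, entries summing to 1, each of absolute value <= C. *)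
Definition in_K (nk rho : nat) (C : R) (r : vec) : Prop :=
  exists s : nat, (s + rho <= nk)%nat /\
    (forall j, (j < nk)%nat -> (j < s \/ s + rho <= j)%nat -> r j = 0) /\
    sumR rho (fun t => r (s + t)%nat) = 1 /\
    (forall t, (t < rho)%nat -> Rabs (r (s + t)%nat) <= C).

Definition in_A (l nk rho : nat) (C : R) (A : mat) : Prop :=
  (rho < nk)%nat /\
  (forall i, (i < l)%nat -> in_K nk rho C (A i)) /\
  (forall j, (j < nk)%nat -> sumR l (fun i => A i j) <> 0).

Definition rows_Hausdorff_cv (m : nat) (nr : nat -> nat) (M : nat -> mat)
    (L : vec -> Prop) : Prop :=
  forall eps, eps > 0 -> exists K, forall k, (K <= k)%nat ->
    (forall i, (i < nr k)%nat -> exists y, L y /\ dist m (M k i) y < eps) /\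
    (forall y, L y -> exists i, (i < nr k)%nat /\ dist m (M k i) y < eps).

(* Main.v *)
Require Import Defs.
From Stdlib Require Import Reals Lra Lia.
Open Scope R_scope.

Lemma sumR_ext n f g : (forall i, (i < n)%nat -> f i = g i) -> sumR n f = sumR n g.
Proof. induction n; simpl; intros H; [lra|]. rewrite IHn by (intros; apply H; lia). rewrite H by lia. lra. Qed.

Lemma sumR_le n f g : (forall i, (i < n)%nat -> f i <= g i) -> sumR n f <= sumR n g.
Proof. induction n; simpl; intros H; [lra|]. assert (f n <= g n) by (apply H; lia).
 assert (sumR n f <= sumR n g) by (apply IHn; intros; apply H; lia). lra. Qed.

Lemma sumR_nonneg n f : (forall i, (i < n)%nat -> 0 <= f i) -> 0 <= sumR n f.
Proof. intros H. replace 0 with (sumR n (fun _ => 0)). apply sumR_le; auto.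
 induction n; simpl; auto. rewrite IHn; [lra|]. intros; apply H; lia. Qed.

Lemma sumR_term n f j : (forall i, (i < n)%nat -> 0 <= f i) -> (j < n)%nat -> f j <= sumR n f.
Proof. induction n; simpl; intros H Hj; [lia|].
 assert (0 <= sumR n f) by (apply sumR_nonneg; intros; apply H; lia).
 destruct (Nat.eq_dec j n). subst; lra.
 assert (f j <= sumR n f) by (apply IHn; [intros; apply H; lia | lia]).
 assert (0 <= f n) by (apply H; lia). lra. Qed.

Lemma sumR_abs n f : Rabs (sumR n f) <= sumR n (fun i => Rabs (f i)).
Proof. induction n; simpl. rewrite Rabs_R0; lra.
 eapply Rle_trans. apply Rabs_triang. lra. Qed.

Lemma sumR_const n c : sumR n (fun _ => c) = INR n * c.
Proof. induction n; simpl sumR. simpl; lra. rewrite IHn, S_INR. lra. Qed.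

Lemma sumR_split a b f : sumR (a + b) f = sumR a f + sumR b (fun t => f (a + t)%nat).
Proof. induction b; simpl. rewrite Nat.add_0_r; lra. rewrite Nat.add_succ_r. simpl. rewrite IHb. lra. Qed.

Lemma sumR_nz l f : sumR l f <> 0 -> exists i, (i < l)%nat /\ f i <> 0.
Proof. induction l; simpl; intros H. lra.
 destruct (Req_dec (f l) 0). destruct IHl as [i [? ?]]. intro; apply H; lra.
 exists i; split; auto; lia. exists l; split; auto; lia. Qed.

Lemma sumR_mulr n f c : sumR n (fun i => f i * c) = sumR n f * c.
Proof. induction n; simpl; [lra|]. rewrite IHn; lra. Qed.

Definition L1 m (x y : vec) := sumR m (fun j => Rabs (x j - y j)).

Lemma dist_coord m x y j : (j < m)%nat -> Rabs (x j - y j) <= Defs.dist m x y.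
Proof. intros Hj. unfold Defs.dist. rewrite <- sqrt_Rsqr_abs. apply sqrt_le_1_alt.
 unfold Rsqr. replace ((x j - y j) * (x j - y j)) with ((x j - y j)^2) by ring.
 apply (sumR_term m (fun l => (x l - y l)^2)); auto. intros; apply pow2_ge_0. Qed.

Lemma dist_L1 m x y : Defs.dist m x y <= L1 m x y.
Proof. unfold Defs.dist, L1.
 assert (H: sumR m (fun j => (x j - y j)^2) <= (sumR m (fun j => Rabs (x j - y j)))^2 /\ 0 <= sumR m (fun j => Rabs (x j - y j))).
 { induction m; simpl; [lra|]. destruct IHm as [H1 H2].
   pose proof (Rabs_pos (x m - y m)).
   assert ((x m - y m)^2 = Rabs (x m - y m) ^2). { rewrite <- !Rsqr_pow2. apply Rsqr_abs. }
   rewrite H. split; [|lra]. simpl. simpl in H1. nra. }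
 destruct H as [H1 H2]. rewrite <- (sqrt_pow2 _ H2). apply sqrt_le_1_alt; auto. Qed.

Lemma L1_tri m x y z : L1 m x z <= L1 m x y + L1 m y z.
Proof. unfold L1. induction m; simpl; [lra|].
 pose proof (Rabs_triang (x m - y m) (y m - z m)). replace (x m - y m + (y m - z m)) with (x m - z m) in H by ring. lra. Qed.

Lemma L1_bound m x y e : (forall j, (j < m)%nat -> Rabs (x j - y j) <= e) -> L1 m x y <= INR m * e.
Proof. intros H. unfold L1. rewrite <- sumR_const. apply sumR_le; auto. Qed.

Lemma L1_dist m x y : L1 m x y <= INR m * Defs.dist m x y.
Proof. apply L1_bound. intros; apply dist_coord; auto. Qed.

Lemma Cnu_cont nu g : Cnu nu g -> continuity g.
Proof. destruct nu; simpl; auto. intros [g' [H _]] x.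
 apply derivable_continuous_pt. exists (g' x). apply H. Qed.

Lemma unif_all m (P : nat -> R -> Prop) :
  (forall j d d', 0 < d' <= d -> P j d -> P j d') ->
  (forall j, (j < m)%nat -> exists d, d > 0 /\ P j d) ->
  exists d, d > 0 /\ forall j, (j < m)%nat -> P j d.
Proof. intros Hm. induction m; intros H.
 - exists 1; split; [lra| intros; lia].
 - destruct IHm as [d1 [? H1]]. intros; apply H; lia.
   destruct (H m) as [d2 [? H2]]. lia.
   exists (Rmin d1 d2). split. apply Rmin_pos; lra.
   intros j Hj. destruct (Nat.eq_dec j m).
   + subst. apply Hm with d2; auto. split. apply Rmin_pos; lra. apply Rmin_r.
   + apply Hm with d1. split. apply Rmin_pos; lra. apply Rmin_l. apply H1; lia. Qed.

Lemma sizes_bound n c : (forall k, (n (S k) <= 2 * n k + c)%nat) ->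
  forall k, (n k + c <= 2 ^ k * (n 0%nat + c))%nat.
Proof. intros H k. induction k. simpl; lia.
 rewrite Nat.pow_succ_r'. specialize (H k). nia. Qed.

Lemma INR_le_pow2 K : INR K <= 2 ^ K.
Proof. induction K. simpl; lra. rewrite S_INR. simpl.
 assert (1 <= 2 ^ K) by (apply pow_R1_Rle; lra). lra. Qed.

Lemma core m nu n Sm p0 rho : binary_sizes n -> Cnu_convergent nu m n Sm p0 ->
  forall e, e > 0 -> exists K, forall k, (K <= k)%nat -> forall j i s,
  (j < m)%nat -> (i < n k)%nat -> (s < n k)%nat -> (s <= i)%nat -> (i < s + rho)%nat ->
  Rabs (pbar n Sm p0 k i j - pbar n Sm p0 k s j) < e.
Proof.
  intros [c Hc] [f [Hf Hconv]] e He.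
  set (N := INR (n 0%nat + c)).
  destruct (unif_all m (fun j d => forall x y, 0 <= x <= N -> 0 <= y <= N ->
     Rabs (x - y) < d -> Rabs (f x j - f y j) < e / 3)) as [d [Hd Hud]].
  { intros j d d' Hd' H x y Hx Hy Hxy. apply H; auto. lra. }
  { intros j Hj. assert (HU := Heine (fun t => f t j) (fun t => 0 <= t <= N) (compact_P3 0 N)
      (fun x _ => Cnu_cont _ _ (Hf j Hj) x)).
    assert (He3 : 0 < e / 3) by lra.
    destruct (HU (mkposreal _ He3)) as [[dd Hdd] Hdd']. exists dd; split; auto. }
  assert (He3 : e / 3 > 0) by lra.
  destruct (Hconv _ He3) as [K1 HK1].
  destruct (INR_archimed d (INR rho) Hd) as [K2 HK2].
  exists (Nat.max K1 K2). intros k Hk j i s Hj Hi Hs Hsi His.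
  assert (HT : 2 ^ K2 <= 2 ^ k) by (apply Rle_pow; [lra|lia]).
  pose proof (INR_le_pow2 K2).
  assert (HTp : 0 < 2 ^ k) by (apply pow_lt; lra).
  assert (HnN : INR (n k) <= 2 ^ k * N).
  { assert (E : INR (2^k*(n 0%nat + c)) = 2^k*N).
    { unfold N. rewrite mult_INR, pow_INR. replace (INR 2) with 2 by (simpl; lra). reflexivity. }
    rewrite <- E. apply le_INR. pose proof (sizes_bound n c Hc k). lia. }
  assert (Hin : forall q, (q < n k)%nat -> 0 <= INR q / 2 ^ k <= N).
  { intros q Hq. apply lt_INR in Hq. pose proof (pos_INR q). split.
    unfold Rdiv; apply Rmult_le_pos; [lra| left; apply Rinv_0_lt_compat; lra].
    apply (Rmult_le_reg_r (2 ^ k)); auto. unfold Rdiv. rewrite Rmult_assoc, Rinv_l by lra. lra. }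
  assert (Hdiff : Rabs (INR i / 2 ^ k - INR s / 2 ^ k) < d).
  { assert (Hrho : INR i - INR s < INR rho).
    { apply lt_INR in His. rewrite plus_INR in His. lra. }
    assert (INR s <= INR i) by (apply le_INR; auto).
    replace (INR i / 2 ^ k - INR s / 2 ^ k) with ((INR i - INR s) * / 2 ^ k) by (field; lra).
    rewrite Rabs_right. 2: { apply Rle_ge, Rmult_le_pos. lra. left; apply Rinv_0_lt_compat; lra. }
    apply (Rmult_lt_reg_r (2 ^ k)); auto. rewrite Rmult_assoc, Rinv_l by lra. nra. }
  pose proof (Hud j Hj _ _ (Hin i Hi) (Hin s Hs) Hdiff).
  assert (A1 := Rle_lt_trans _ _ _ (dist_coord m _ _ j Hj) (HK1 k ltac:(lia) i Hi)).
  assert (A2 := Rle_lt_trans _ _ _ (dist_coord m _ _ j Hj) (HK1 k ltac:(lia) s Hs)).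
  simpl in A1, A2.
  replace (pbar n Sm p0 k i j - pbar n Sm p0 k s j) with
    ((pbar n Sm p0 k i j - f (INR i / 2 ^ k) j) + (f (INR i / 2 ^ k) j - f (INR s / 2 ^ k) j)
     - (pbar n Sm p0 k s j - f (INR s / 2 ^ k) j)) by ring.
  set (a := pbar n Sm p0 k i j - f (INR i / 2 ^ k) j) in *.
  set (b := f (INR i / 2 ^ k) j - f (INR s / 2 ^ k) j) in *.
  set (c0 := pbar n Sm p0 k s j - f (INR s / 2 ^ k) j) in *.
  pose proof (Rabs_triang (a + b) (- c0)) as T1. pose proof (Rabs_triang a b) as T2.
  rewrite Rabs_Ropp in T1. unfold Rminus. lra.
Qed.

Lemma sumR_zero n f : (forall i, (i < n)%nat -> f i = 0) -> sumR n f = 0.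
Proof. intros H. rewrite (sumR_ext n f (fun _ => 0)) by auto. rewrite sumR_const; lra. Qed.

Lemma row_coord nk rho C (r g : vec) s q e :
  (s + rho <= nk)%nat ->
  (forall j, (j < nk)%nat -> (j < s \/ s + rho <= j)%nat -> r j = 0) ->
  sumR rho (fun t => r (s + t)%nat) = 1 ->
  (forall t, (t < rho)%nat -> Rabs (r (s + t)%nat) <= C) ->
  (forall t, (t < rho)%nat -> Rabs (g (s + t)%nat - g q) <= e) ->
  Rabs (sumR nk (fun l => r l * g l) - g q) <= INR rho * (C * e).
Proof.
  intros Hs Hz H1 HC Hg.
  replace nk with (s + (rho + (nk - s - rho)))%nat by lia.
  rewrite !sumR_split.
  rewrite (sumR_zero s). 2: { intros i Hi. rewrite Hz by lia. ring. }
  rewrite (sumR_zero (nk - s - rho)). 2: { intros i Hi. rewrite Hz by lia. ring. }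
  replace (0 + (sumR rho (fun t => r (s + t)%nat * g (s + t)%nat) + 0) - g q)
    with (sumR rho (fun t => r (s + t)%nat * (g (s + t)%nat - g q))).
  2: { rewrite (sumR_ext rho _ (fun t => r (s + t)%nat * g (s + t)%nat + (- g q) * r (s+t)%nat)) by (intros; ring).
       assert (forall f h n, sumR n (fun t => f t + h t) = sumR n f + sumR n h) as Hadd.
       { intros f h n; induction n; simpl; [lra|]. rewrite IHn; lra. }
       rewrite Hadd. rewrite (sumR_ext rho (fun t => - g q * r (s + t)%nat) (fun t => r (s+t)%nat * - g q)) by (intros; ring).
       rewrite sumR_mulr, H1. ring. }
  eapply Rle_trans. apply sumR_abs. rewrite <- sumR_const. apply sumR_le.
  intros t Ht. rewrite Rabs_mult. apply Rmult_le_compat; auto using Rabs_pos.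
Qed.

Theorem mainTheorem11
  (m nu : nat) (n : nat -> nat) (Sm : nat -> mat) (p0 : mat)
  (pinf : vec -> Prop) (rho : nat) (C : R) (A : nat -> mat) :
  (0 < nu)%nat ->
  binary_sizes n ->
  Cnu_convergent nu m n Sm p0 ->
  rows_Hausdorff_cv m n (pbar n Sm p0) pinf ->
  (0 < rho)%nat -> C > 0 ->
  (exists K0, forall k, (K0 <= k)%nat -> in_A (n k) (n k) rho C (A k)) ->
  rows_Hausdorff_cv m n (fun k => matmul (n k) (A k) (pbar n Sm p0 k)) pinf.
Proof.
  intros _ Hsz Hcv HH Hrho HC [K0 HK0] eps Heps.
  set (M := INR m). set (Rr := INR rho).
  assert (HM : 0 <= M) by apply pos_INR. assert (HR : 0 <= Rr) by apply pos_INR.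
  set (e := eps / (4 * (M * Rr * C + 1))).
  assert (HD : 0 < M * Rr * C + 1) by (assert (0 <= M * Rr * C) by (apply Rmult_le_pos; [apply Rmult_le_pos|]; lra); lra).
  assert (He : e > 0) by (unfold e; apply Rdiv_lt_0_compat; lra).
  assert (HMe : M * (Rr * (C * (2 * e))) <= eps / 2).
  { unfold e. replace (M * (Rr * (C * (2 * (eps / (4 * (M * Rr * C + 1)))))))
      with ((eps / 2) * ((M * Rr * C) / (M * Rr * C + 1))) by (field; lra).
    assert (M * Rr * C / (M * Rr * C + 1) <= 1).
    { apply (Rmult_le_reg_r (M * Rr * C + 1)); auto. unfold Rdiv. rewrite Rmult_assoc, Rinv_l by lra. lra. }
    assert (0 <= M * Rr * C / (M * Rr * C + 1)).
    { unfold Rdiv. apply Rmult_le_pos. apply Rmult_le_pos; [apply Rmult_le_pos|]; lra.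
      left; apply Rinv_0_lt_compat; lra. }
    nra. }
  set (e' := eps / (2 * (M + 1))).
  assert (He' : e' > 0) by (unfold e'; apply Rdiv_lt_0_compat; lra).
  assert (HMe' : forall x, 0 <= x < e' -> M * x < eps / 2).
  { intros x Hx. assert (M * e' < eps / 2).
    { unfold e'. replace (M * (eps / (2 * (M + 1)))) with ((eps/2) * (M / (M+1))) by (field; lra).
      assert (M / (M + 1) < 1).
      { apply (Rmult_lt_reg_r (M + 1)); [lra|]. unfold Rdiv. rewrite Rmult_assoc, Rinv_l by lra. lra. }
      nra. }
    nra. }
  destruct (core m nu n Sm p0 rho Hsz Hcv e He) as [K1 HK1].
  destruct (HH e' He') as [K2 HK2].
  exists (Nat.max K0 (Nat.max K1 K2)). intros k Hk.
  set (P := pbar n Sm p0 k).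
  destruct (HK0 k ltac:(lia)) as [_ [Hrows Hcols]].
  assert (Key : forall i s q, (i < n k)%nat ->
     (s + rho <= n k)%nat ->
     (forall j, (j < n k)%nat -> (j < s \/ s + rho <= j)%nat -> A k i j = 0) ->
     sumR rho (fun t => A k i (s + t)%nat) = 1 ->
     (forall t, (t < rho)%nat -> Rabs (A k i (s + t)%nat) <= C) ->
     (s <= q)%nat -> (q < s + rho)%nat -> (q < n k)%nat ->
     forall y, Defs.dist m (P q) y < e' ->
     Defs.dist m (matmul (n k) (A k) P i) y < eps).
  { intros i s q Hi Hs Hz H1 HCb Hsq Hqs Hq y Hy.
    eapply Rle_lt_trans. apply dist_L1.
    eapply Rle_lt_trans. apply (L1_tri m _ (P q)).
    assert (L1 m (matmul (n k) (A k) P i) (P q) <= M * (Rr * (C * (2 * e)))).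
    { apply L1_bound. intros j Hj. unfold matmul.
      apply (row_coord (n k) rho C (A k i) (fun l => P l j) s q (2 * e)); auto.
      intros t Ht. simpl.
      assert (T1 := HK1 k ltac:(lia) j (s + t)%nat s Hj ltac:(lia) ltac:(lia) ltac:(lia) ltac:(lia)).
      assert (T2 := HK1 k ltac:(lia) j q s Hj Hq ltac:(lia) Hsq Hqs).
      fold P in T1, T2.
      replace (P (s + t)%nat j - P q j) with ((P (s + t)%nat j - P s j) + - (P q j - P s j)) by ring.
      eapply Rle_trans. apply Rabs_triang. rewrite Rabs_Ropp. lra. }
    assert (L1 m (P q) y <= M * Defs.dist m (P q) y) by apply L1_dist.
    assert (0 <= Defs.dist m (P q) y) by (unfold Defs.dist; apply sqrt_pos).
    specialize (HMe' (Defs.dist m (P q) y) ltac:(lra)). lra. }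
  split.
  - intros i Hi. destruct (Hrows i Hi) as [s [Hs [Hz [H1 HCb]]]].
    destruct (proj1 (HK2 k ltac:(lia)) s ltac:(lia)) as [y [Hy Hdy]].
    exists y. split; auto. apply (Key i s s); auto; lia.
  - intros y Hy. destruct (proj2 (HK2 k ltac:(lia)) y Hy) as [q [Hq Hdq]].
    destruct (sumR_nz _ _ (Hcols q Hq)) as [i [Hi Hnz]].
    destruct (Hrows i Hi) as [s [Hs [Hz [H1 HCb]]]].
    exists i. split; auto.
    assert (s <= q /\ q < s + rho)%nat as [Hsq Hqs].
    { destruct (Nat.lt_ge_cases q s); [exfalso; apply Hnz; apply Hz; lia|].
      destruct (Nat.lt_ge_cases q (s + rho)); [lia|exfalso; apply Hnz; apply Hz; lia]. }
    apply (Key i s q); auto.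
Qed.
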